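(* For every client $i$ there exist deterministic matrices $L_1,\dots,L_n$, $L_{i'}\in\mathbb R^{d\times n_{i'}}$, with $\sum_{i'=1}^nL_{i'}X_{i'}=I_d$ (i.e. $\tilde\theta_i=\sum_{i'}L_{i'}y_{i'}$ is a linear unbiased estimator of $\theta_i^*$ given $\{(X_{i'},y_{i'})\}_{i'=1}^n$), such that $\mathbb E\|\tilde\theta_i-\theta_i^*\|^2\le\mathbb E\|\hat\theta_i-\theta_i^*\|^2$.
   Context: Hierarchical linear model: clients $1,\dots,n$ are partitioned into nonempty disjoint clusters $\mathcal I_1,\dots,\mathcal I_k$. For an unknown $\bar\theta^*\in\mathbb R^d$ and known variances $\bar\sigma^2>0$, $\bar\sigma_j^2>0$, $\sigma_i^2>0$: $\bar\theta_j^*=\bar\theta^*+\bar\xi_j$ with $\bar\xi_j\sim\mathcal N(0,\bar\sigma^2I_d)$; $\theta_i^*=\bar\theta_j^*+\xi_i$ with $\xi_i\sim\mathcal N(0,\bar\sigma_j^2I_d)$ for $i\in\mathcal I_j$; $y_i=X_i\theta_i^*+\epsilon_i$ with $\epsilon_i\sim\mathcal N(0,\sigma_i^2I_{n_i})$, $X_i\in\mathbb R^{n_i\times d}$ deterministic with $X_i^TX_i=\beta_iI_d$, $\beta_i>0$; all noise variables mutually independent. $\{\hat\theta_i\}$ are the $\theta$-components of the minimizer of $\sum_{j=1}^k\big(\frac{\lambda_j}{2}\|w_j-\bar w\|^2+\sum_{i\in\mathcal I_j}(\frac{1}{2\sigma_i^2}\|y_i-X_i\theta_i\|^2+\frac{\gamma_i}{2}\|\theta_i-w_j\|^2)\big)$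 over $\theta_i,w_j,\bar w\in\mathbb R^d$, with $\lambda_j=1/\bar\sigma^2$ and $\gamma_i=1/\bar\sigma_j^2$ for $i\in\mathcal I_j$. Expectations are over all randomness in the model. *)

(* Defs.v *)
From HB Require Import structures.
From mathcomp Require Import all_boot all_order all_algebra.
From mathcomp Require Import all_classical all_reals all_analysis.
From mathcomp Require Import normal_distribution.

Set Implicit Arguments.
Unset Strict Implicit.
Unset Printing Implicit Defensive.

Import Order.TTheory GRing.Theory Num.Theory.
Local Open Scope classical_set_scope.
Local Open Scope ring_scope.

Definition mutually_independent {d} {T : measurableType d} {R : realType}
  (P : probability T R) (I : finType) (X : I -> T -> R) : Prop :=
  (forall i, measurable_fun setT (X i)) /\
  forall (J : {set I}) (B : I -> set R), (forall j, measurable (B j)) ->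
    P (\big[setI/setT]_(j in J) (X j @^-1` B j)) =
    (\prod_(j in J) P (X j @^-1` B j))%E.

(* X has the normal distribution N(0, v) (v is the VARIANCE;
   normal_prob takes the standard deviation). *)
Definition has_normal_law {d} {T : measurableType d} {R : realType}
  (P : probability T R) (X : T -> R) (v : R) : Prop :=
  forall B : set R, measurable B -> P (X @^-1` B) = normal_prob 0 (Num.sqrt v) B.

Definition sqnorm {R : realType} {m : nat} (v : 'cV[R]_m) : R :=
  \sum_(a < m) (v a 0) ^+ 2.

(* Index type of all scalar noise coordinates:
   (cluster j, coordinate a) for bar xi_j, (client i, coordinate a) for xi_i,
   (client i, sample r < n_i) for eps_i. *)
Definition noise_index (n k d : nat) (ni : 'I_n -> nat) : finType :=
  (('I_k * 'I_d) + ('I_n * 'I_d) + {i : 'I_n & 'I_(ni i)})%type.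
Arguments noise_index : clear implicits.

Definition noise_coord {T : Type} {R : realType} (n k d : nat)
  (ni : 'I_n -> nat)
  (xibar : 'I_k -> T -> 'cV[R]_d) (xi : 'I_n -> T -> 'cV[R]_d)
  (eps : forall i : 'I_n, T -> 'cV[R]_(ni i))
  (z : noise_index n k d ni) : T -> R :=
  match z with
  | inl (inl (j, a)) => fun w => xibar j w a 0
  | inl (inr (i, a)) => fun w => xi i w a 0
  | inr (existT i r) => fun w => eps i w r 0
  end.

Definition noise_var {R : realType} (n k d : nat) (ni : 'I_n -> nat)
  (c : 'I_n -> 'I_k) (sbar2 : R) (sbarj2 : 'I_k -> R) (s2 : 'I_n -> R)
  (z : noise_index n k d ni) : R :=
  match z with
  | inl (inl _) => sbar2
  | inl (inr (i, _)) => sbarj2 (c i)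
  | inr (existT i _) => s2 i
  end.

Definition theta_star {T : Type} {R : realType} (n k d : nat)
  (c : 'I_n -> 'I_k) (thetabar : 'cV[R]_d)
  (xibar : 'I_k -> T -> 'cV[R]_d) (xi : 'I_n -> T -> 'cV[R]_d)
  (i : 'I_n) (w : T) : 'cV[R]_d :=
  thetabar + xibar (c i) w + xi i w.

Definition obs {T : Type} {R : realType} (n k d : nat) (ni : 'I_n -> nat)
  (c : 'I_n -> 'I_k) (X : forall i : 'I_n, 'M[R]_(ni i, d))
  (thetabar : 'cV[R]_d)
  (xibar : 'I_k -> T -> 'cV[R]_d) (xi : 'I_n -> T -> 'cV[R]_d)
  (eps : forall i : 'I_n, T -> 'cV[R]_(ni i)) (i : 'I_n) (w : T)
  : 'cV[R]_(ni i) :=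
  X i *m theta_star c thetabar xibar xi i w + eps i w.

(* The hierarchical objective, with lambda_j = 1/sbar2, gamma_i = 1/sbarj2_{c i}. *)
Definition hier_obj {R : realType} (n k d : nat) (ni : 'I_n -> nat)
  (c : 'I_n -> 'I_k) (X : forall i : 'I_n, 'M[R]_(ni i, d))
  (sbar2 : R) (sbarj2 : 'I_k -> R) (s2 : 'I_n -> R)
  (yv : forall i : 'I_n, 'cV[R]_(ni i))
  (theta : 'I_n -> 'cV[R]_d) (wv : 'I_k -> 'cV[R]_d) (wbar : 'cV[R]_d) : R :=
  \sum_(j < k)
    ( (sbar2^-1 / 2) * sqnorm (wv j - wbar)
    + \sum_(i < n | c i == j)
        ( (2 * s2 i)^-1 * sqnorm (yv i - X i *m theta i)
        + ((sbarj2 j)^-1 / 2) * sqnorm (theta i - wv j))).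

(* Main.v *)
Require Import Defs.
From HB Require Import structures.
From mathcomp Require Import all_boot all_order all_algebra.
From mathcomp Require Import all_classical all_reals all_analysis.
From mathcomp Require Import normal_distribution.
From mathcomp Require Import ring lra.
Import Order.TTheory GRing.Theory Num.Theory.
Local Open Scope ring_scope.
Set Implicit Arguments.
Unset Strict Implicit.

Section IP.
Variables (R : realType) (m : nat).
Definition ip (u v : 'cV[R]_m) : R := (u^T *m v) 0 0.
Implicit Types u v w h : 'cV[R]_m.

Lemma ipC u v : ip u v = ip v u.
Proof. rewrite /ip; have <- : (u^T *m v)^T 0 0 = (u^T *m v) 0 0 by rewrite mxE.
by rewrite trmx_mul trmxK. Qed.

Lemma ipDr u v w : ip u (v + w) = ip u v + ip u w.
Proof. by rewrite /ip mulmxDr mxE. Qed.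

Lemma ipZr u a v : ip u (a *: v) = a * ip u v.
Proof. by rewrite /ip -scalemxAr mxE. Qed.

Lemma ipDl u v w : ip (u + v) w = ip u w + ip v w.
Proof. by rewrite ipC ipDr !(ipC w). Qed.

Lemma ipZl u a v : ip (a *: u) v = a * ip u v.
Proof. by rewrite ipC ipZr ipC. Qed.

Lemma ipNr u v : ip u (- v) = - ip u v.
Proof. by rewrite -scaleN1r ipZr mulN1r. Qed.

Lemma ipNl u v : ip (- u) v = - ip u v.
Proof. by rewrite ipC ipNr ipC. Qed.

Lemma ip0r u : ip u 0 = 0.
Proof. by rewrite /ip mulmx0 mxE. Qed.

Lemma ip0l u : ip 0 u = 0.
Proof. by rewrite ipC ip0r. Qed.

Lemma ip_sumr I (r : seq I) (P : pred I) u (F : I -> 'cV[R]_m) :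
  ip u (\sum_(x <- r | P x) F x) = \sum_(x <- r | P x) ip u (F x).
Proof.
elim/big_rec2: _ => [|x a b _ <-]; first by rewrite ip0r.
by rewrite ipDr.
Qed.

Lemma ip_suml I (r : seq I) (P : pred I) u (F : I -> 'cV[R]_m) :
  ip (\sum_(x <- r | P x) F x) u = \sum_(x <- r | P x) ip (F x) u.
Proof. by rewrite ipC ip_sumr; apply: eq_bigr => x _; rewrite ipC. Qed.


Lemma sqnorm_ip u : sqnorm u = ip u u.
Proof. rewrite /ip mxE; apply: eq_bigr => a _; by rewrite mxE expr2. Qed.

Lemma sqnorm_expand u t v :
  sqnorm (u + t *: v) = sqnorm u + t * (2 * ip u v) + t ^+ 2 * sqnorm v.
Proof.
rewrite !sqnorm_ip !ipDl !ipDr !ipZl !ipZr (ipC v u). ring.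
Qed.

Lemma sqnorm_eq0 u : sqnorm u = 0 -> u = 0.
Proof.
move=> /eqP; rewrite /sqnorm psumr_eq0 => [/allP H|a _]; last exact: sqr_ge0.
apply/matrixP => a b; rewrite (ord1 b) mxE.
have := H a (mem_index_enum a); rewrite /= sqrf_eq0 => /eqP //.
Qed.

Lemma ip_eq0 u : (forall h, ip u h = 0) -> u = 0.
Proof. by move=> H; apply: sqnorm_eq0; rewrite sqnorm_ip H. Qed.

End IP.

Lemma ipM (R : realType) p m (A : 'M[R]_(p, m)) (u : 'cV[R]_p) (v : 'cV[R]_m) :
  ip u (A *m v) = ip (A^T *m u) v.
Proof. by rewrite /ip trmx_mul trmxK mulmxA. Qed.

Lemma quad0 (R : realType) (D Q : R) :
  (forall t : R, 0 <= t * D + t ^+ 2 * Q) -> D = 0.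
Proof.
move=> H.
set e := (`|Q| + 1)^-1.
have e1 : 0 < `|Q| + 1 by have := normr_ge0 Q; lra.
have e0 : 0 < e by rewrite invr_gt0.
have eQ : e * Q < 1.
  have hQ : Q < `|Q| + 1 by have := ler_norm Q; lra.
  have : e * Q < e * (`|Q| + 1) by rewrite ltr_pM2l.
  by rewrite mulVf // gt_eqF.
have := H (- D * e).
have -> : (- D * e) * D + (- D * e) ^+ 2 * Q = D ^+ 2 * (e * (e * Q - 1)) by ring.
have hneg : e * (e * Q - 1) < 0 by rewrite pmulr_rlt0 // subr_lt0.
move=> h2; apply/eqP; rewrite -sqrf_eq0 eq_le sqr_ge0 andbT.
rewrite leNgt; apply/negP => hD.
have : D ^+ 2 * (e * (e * Q - 1)) < 0 by rewrite pmulr_rlt0.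
by rewrite ltNge h2.
Qed.

Lemma part_sum (V : nmodType) n k (c : 'I_n -> 'I_k) (F : 'I_n -> 'I_k -> V) :
  \sum_(j < k) \sum_(i < n | c i == j) F i j = \sum_(i < n) F i (c i).
Proof.
under eq_bigr do rewrite big_mkcond.
rewrite exchange_big /=; apply: eq_bigr => i _.
rewrite (bigD1 (c i)) //= eqxx big1 ?addr0 // => j /negbTE.
by rewrite eq_sym => ->.
Qed.
Section Obj.
Variables (R : realType) (n k d : nat) (c : 'I_n -> 'I_k) (ni : 'I_n -> nat)
  (X : forall i : 'I_n, 'M[R]_(ni i, d)) (sbar2 : R) (sbarj2 : 'I_k -> R)
  (s2 : 'I_n -> R) (yv : forall i : 'I_n, 'cV[R]_(ni i)).

Definition objS (th : 'I_n -> 'cV[R]_d) (w : 'I_k -> 'cV[R]_d) (b : 'cV[R]_d) :=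
  \sum_(j < k) (sbar2^-1 / 2) * sqnorm (w j - b) +
  \sum_(i < n) ((2 * s2 i)^-1 * sqnorm (yv i - X i *m th i)
               + ((sbarj2 (c i))^-1 / 2) * sqnorm (th i - w (c i))).

Lemma obj_split th w b : hier_obj c X sbar2 sbarj2 s2 yv th w b = objS th w b.
Proof.
rewrite /hier_obj /objS big_split /=; congr (_ + _).
exact: (part_sum c (fun i j => (2 * s2 i)^-1 * sqnorm (yv i - X i *m th i)
               + ((sbarj2 j)^-1 / 2) * sqnorm (th i - w j))).
Qed.

Definition Dfun th w b (Ht : 'I_n -> 'cV[R]_d) (Hw : 'I_k -> 'cV[R]_d) (Hb : 'cV[R]_d) :=
  \sum_(j < k) (sbar2^-1 / 2) * (2 * ip (w j - b) (Hw j - Hb)) +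
  \sum_(i < n) ((2 * s2 i)^-1 * (2 * ip (yv i - X i *m th i) (- (X i *m Ht i)))
               + ((sbarj2 (c i))^-1 / 2) * (2 * ip (th i - w (c i)) (Ht i - Hw (c i)))).

Definition Qfun (Ht : 'I_n -> 'cV[R]_d) (Hw : 'I_k -> 'cV[R]_d) (Hb : 'cV[R]_d) :=
  \sum_(j < k) (sbar2^-1 / 2) * sqnorm (Hw j - Hb) +
  \sum_(i < n) ((2 * s2 i)^-1 * sqnorm (- (X i *m Ht i))
               + ((sbarj2 (c i))^-1 / 2) * sqnorm (Ht i - Hw (c i))).

Lemma diff_pert m (a b x y : 'cV[R]_m) t :
  (a + t *: x) - (b + t *: y) = (a - b) + t *: (x - y).
Proof. by rewrite opprD addrACA scalerBr. Qed.

Lemma sum3 (I : Type) (r : seq I) (P : pred I) (a b e : I -> R) (t : R) :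
  \sum_(i <- r | P i) (a i + t * b i + t ^+ 2 * e i) =
  \sum_(i <- r | P i) a i + t * \sum_(i <- r | P i) b i + t ^+ 2 * \sum_(i <- r | P i) e i.
Proof. by rewrite !big_split /= -!mulr_sumr. Qed.

Lemma obj_pert th w b Ht Hw Hb t :
  objS (fun i => th i + t *: Ht i) (fun j => w j + t *: Hw j) (b + t *: Hb)
  = objS th w b + t * Dfun th w b Ht Hw Hb + t ^+ 2 * Qfun Ht Hw Hb.
Proof.
rewrite /objS /Dfun /Qfun.
have E1 : forall j, (sbar2^-1 / 2) * sqnorm (w j + t *: Hw j - (b + t *: Hb)) =
   (sbar2^-1 / 2) * sqnorm (w j - b) + t * ((sbar2^-1 / 2) * (2 * ip (w j - b) (Hw j - Hb)))
   + t ^+ 2 * ((sbar2^-1 / 2) * sqnorm (Hw j - Hb)).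
  by move=> j; rewrite diff_pert sqnorm_expand; ring.
have E2 : forall i, (2 * s2 i)^-1 * sqnorm (yv i - X i *m (th i + t *: Ht i))
               + ((sbarj2 (c i))^-1 / 2) * sqnorm (th i + t *: Ht i - (w (c i) + t *: Hw (c i))) =
   ((2 * s2 i)^-1 * sqnorm (yv i - X i *m th i)
               + ((sbarj2 (c i))^-1 / 2) * sqnorm (th i - w (c i)))
   + t * ((2 * s2 i)^-1 * (2 * ip (yv i - X i *m th i) (- (X i *m Ht i)))
               + ((sbarj2 (c i))^-1 / 2) * (2 * ip (th i - w (c i)) (Ht i - Hw (c i))))
   + t ^+ 2 * ((2 * s2 i)^-1 * sqnorm (- (X i *m Ht i))
               + ((sbarj2 (c i))^-1 / 2) * sqnorm (Ht i - Hw (c i))).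
  move=> i; rewrite diff_pert sqnorm_expand.
  have -> : yv i - X i *m (th i + t *: Ht i) = (yv i - X i *m th i) + t *: (- (X i *m Ht i)).
    by rewrite mulmxDr -scalemxAr scalerN opprD addrA.
  rewrite sqnorm_expand; ring.
under eq_bigr do rewrite E1.
under [X in _ + X = _]eq_bigr do rewrite E2.
rewrite !sum3; ring.
Qed.

Lemma foc th w b :
  (forall th' w' b', objS th w b <= objS th' w' b') ->
  forall Ht Hw Hb, Dfun th w b Ht Hw Hb = 0.
Proof.
move=> Hmin Ht Hw Hb; apply: (@quad0 _ _ (Qfun Ht Hw Hb)) => t.
have := Hmin (fun i => th i + t *: Ht i) (fun j => w j + t *: Hw j) (b + t *: Hb).
rewrite obj_pert; lra.
Qed.

End Obj.
Section FOC.
Variables (R : realType) (n k d : nat) (c : 'I_n -> 'I_k) (ni : 'I_n -> nat)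
  (X : forall i : 'I_n, 'M[R]_(ni i, d)) (sbar2 : R) (sbarj2 : 'I_k -> R)
  (s2 : 'I_n -> R) (yv : forall i : 'I_n, 'cV[R]_(ni i)).
Hypothesis (sbar2_pos : 0 < sbar2) (sbarj2_pos : forall j, 0 < sbarj2 j)
  (s2_pos : forall i, 0 < s2 i).
Variables (th : 'I_n -> 'cV[R]_d) (w : 'I_k -> 'cV[R]_d) (b : 'cV[R]_d).
Hypothesis Hm : forall th' w' b', objS c X sbar2 sbarj2 s2 yv th w b
   <= objS c X sbar2 sbarj2 s2 yv th' w' b'.

Lemma foc1 i0 :
  (sbarj2 (c i0))^-1 *: (th i0 - w (c i0)) =
  (s2 i0)^-1 *: ((X i0)^T *m (yv i0 - X i0 *m th i0)).
Proof.
apply/eqP; rewrite -subr_eq0; apply/eqP; apply: ip_eq0 => h.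
have := foc Hm (fun i => if i == i0 then h else 0) (fun _ => 0) 0.
rewrite /Dfun big1 ?add0r; last by move=> j _ /=; rewrite ?subrr ?oppr0 ip0r !mulr0.
rewrite (bigD1 i0) //= eqxx big1 ?addr0; last first.
  by move=> i /negbTE ->; rewrite mulmx0 oppr0 subrr !ip0r !mulr0 addr0.
rewrite subr0 ipNr ipM => H.
rewrite ipDl ipNl !ipZl -[RHS](H); have := s2_pos i0; have := sbarj2_pos (c i0) => h1 h2.
field; rewrite ?gt_eqF //.
Qed.

Lemma foc2 j0 :
  sbar2^-1 *: (w j0 - b) =
  \sum_(i < n | c i == j0) (sbarj2 (c i))^-1 *: (th i - w (c i)).
Proof.
apply/eqP; rewrite -subr_eq0; apply/eqP; apply: ip_eq0 => h.
have := foc Hm (fun _ => 0) (fun j => if j == j0 then h else 0) 0.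
rewrite /Dfun (bigD1 j0) //= eqxx big1 ?addr0; last first.
  by move=> j /negbTE ->; rewrite subrr ip0r !mulr0.
have S : \sum_(i < n) ((2 * s2 i)^-1 * (2 * ip (yv i - X i *m th i) (- (X i *m 0)))
   + ((sbarj2 (c i))^-1 / 2) * (2 * ip (th i - w (c i)) (0 - (if c i == j0 then h else 0))))
   = - \sum_(i < n | c i == j0) (sbarj2 (c i))^-1 * ip (th i - w (c i)) h.
  rewrite [in RHS]big_mkcond -sumrN; apply: eq_bigr => i _.
  rewrite mulmx0 oppr0 ip0r !mulr0 add0r sub0r ipNr.
  by case: (c i == j0); rewrite ?ip0r ?oppr0 ?mulr0 ?oppr0 //; field; rewrite gt_eqF.
rewrite S subr0 => H.
rewrite ipDl ipNl ip_suml ipZl -[RHS](H); under eq_bigr do rewrite ipZl.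
by field; rewrite gt_eqF.
Qed.

Lemma foc3 : \sum_(j < k) (w j - b) = 0.
Proof.
apply: ip_eq0 => h.
have := foc Hm (fun _ => 0) (fun _ => 0) h.
rewrite /Dfun [X in _ + X]big1 ?addr0; last first.
  by move=> i _; rewrite mulmx0 oppr0 subrr !ip0r !mulr0 addr0.
under eq_bigr do rewrite sub0r ipNr.
have -> : \sum_(j < k) (sbar2^-1 / 2) * (2 * - ip (w j - b) h) =
          (- sbar2^-1) * \sum_(j < k) ip (w j - b) h.
  by rewrite mulr_sumr; apply: eq_bigr => j _; field; rewrite gt_eqF.
move/eqP; rewrite mulf_eq0 oppr_eq0 invr_eq0 (gt_eqF sbar2_pos) /= ip_suml.
by move/eqP.
Qed.

End FOC.
Lemma solve1 (R : realType) (a G t w u : R) : 0 < a -> 0 < G ->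
  G * (t - w) = a * (u - t) -> t = a / (a + G) * u + G / (a + G) * w.
Proof.
move=> ha hG h; have hn : a + G != 0 by rewrite gt_eqF // addr_gt0.
apply/eqP; rewrite -subr_eq0; apply/eqP.
have -> : t - (a / (a + G) * u + G / (a + G) * w) = (G * (t - w) - a * (u - t)) / (a + G)
  by field.
by rewrite h subrr mul0r.
Qed.

Lemma solve4 (R : realType) (l P w b U : R) : 0 < l -> 0 <= P ->
  l * (w - b) = U - P * w -> w = (U + l * b) / (l + P).
Proof.
move=> hl hP h; have hn : l + P != 0 by rewrite gt_eqF // ltr_wpDr.
apply/eqP; rewrite -subr_eq0; apply/eqP.
have -> : w - (U + l * b) / (l + P) = (l * (w - b) - (U - P * w)) / (l + P) by field.
by rewrite h subrr mul0r.
Qed.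

Section Core.
Variables (R : realType) (n k : nat) (c : 'I_n -> 'I_k)
  (beta : 'I_n -> R) (sbar2 : R) (sbarj2 : 'I_k -> R) (s2 : 'I_n -> R).
Hypotheses (c_surj : forall j : 'I_k, exists i : 'I_n, c i = j)
  (beta_pos : forall i, 0 < beta i)
  (sbar2_pos : 0 < sbar2) (sbarj2_pos : forall j, 0 < sbarj2 j)
  (s2_pos : forall i, 0 < s2 i).

Definition aa i := beta i / s2 i.
Definition GG i := (sbarj2 (c i))^-1.
Definition al i := aa i / (aa i + GG i).
Definition ga i := GG i / (aa i + GG i).
Definition pp i := aa i * GG i / (aa i + GG i).
Definition lam := sbar2^-1.
Definition PP j := \sum_(i < n | c i == j) pp i.
Definition SS := \sum_(j < k) PP j / (lam + PP j).
Definition cb i := pp i / (SS * (lam + PP (c i))).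
Definition cw j i := ((if c i == j then pp i else 0) + lam * cb i) / (lam + PP j).
Definition ct i0 i := (if i == i0 then al i0 else 0) + ga i0 * cw (c i0) i.

Lemma aa_pos i : 0 < aa i. Proof. by rewrite /aa divr_gt0. Qed.
Lemma GG_pos i : 0 < GG i. Proof. by rewrite invr_gt0. Qed.
Lemma pp_pos i : 0 < pp i.
Proof. apply: divr_gt0; [apply: mulr_gt0|apply: addr_gt0]; by [apply: aa_pos|apply: GG_pos]. Qed.
Lemma lam_pos : 0 < lam. Proof. by rewrite invr_gt0. Qed.
Lemma PP_pos j : 0 < PP j.
Proof.
have [i ci] := c_surj j; rewrite /PP (bigD1 i) ?ci //=.
rewrite ltr_pwDl ?pp_pos // sumr_ge0 // => i' _; exact: ltW (pp_pos i').
Qed.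
Lemma lamP_neq0 j : lam + PP j != 0.
Proof. by rewrite gt_eqF // addr_gt0 ?lam_pos ?PP_pos. Qed.
Lemma SS_pos (i0 : 'I_n) : 0 < SS.
Proof.
rewrite /SS (bigD1 (c i0)) //= ltr_pwDl ?divr_gt0 ?PP_pos ?addr_gt0 ?lam_pos ?PP_pos //.
rewrite sumr_ge0 // => j _; apply: ltW; rewrite divr_gt0 ?PP_pos ?addr_gt0 ?lam_pos ?PP_pos //.
Qed.

Lemma core (th : 'I_n -> R) (w : 'I_k -> R) (b : R) (u : 'I_n -> R) :
  (forall i, GG i * (th i - w (c i)) = (s2 i)^-1 * (beta i * u i - beta i * th i)) ->
  (forall j, lam * (w j - b) = \sum_(i < n | c i == j) GG i * (th i - w (c i))) ->
  \sum_(j < k) (w j - b) = 0 ->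
  forall i0, th i0 = \sum_(i < n) ct i0 i * u i.
Proof.
move=> E1 E2 E3 i0.
have s1 i : th i = al i * u i + ga i * w (c i).
  by apply: solve1; rewrite ?aa_pos ?GG_pos // E1 /aa; field; rewrite gt_eqF.
have s2' i : GG i * (th i - w (c i)) = pp i * (u i - w (c i)).
  rewrite s1 /al /ga /pp; have := aa_pos i; have := GG_pos i => h1 h2.
  by field; rewrite gt_eqF // addr_gt0.
set U := fun j => \sum_(i < n | c i == j) pp i * u i.
have s3 j : lam * (w j - b) = U j - PP j * w j.
  rewrite E2 /U /PP mulr_suml -sumrB; apply: eq_bigr => i /eqP ci.
  by rewrite s2' ci mulrBr.
have s4 j : w j = (U j + lam * b) / (lam + PP j).
  by apply: solve4; rewrite ?lam_pos ?s3 // ltW ?PP_pos.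
have hS := SS_pos i0.
have s5 : b = \sum_(i < n) cb i * u i.
  have e1 : \sum_(j < k) (w j - b) =
      \sum_(j < k) U j / (lam + PP j) - b * SS.
    rewrite /SS mulr_sumr -sumrB; apply: eq_bigr => j _.
    rewrite s4; have := lamP_neq0 j => h; field => //.
  move: E3; rewrite e1 => /eqP; rewrite subr_eq0 => /eqP e2.
  have -> : b = (\sum_(j < k) U j / (lam + PP j)) / SS by rewrite e2; field; rewrite gt_eqF.
  rewrite /U; under eq_bigr do rewrite mulr_suml.
  rewrite (part_sum c (fun i j => pp i * u i / (lam + PP j))) mulr_suml.
  apply: eq_bigr => i _; rewrite /cb; have := lamP_neq0 (c i) => h.
  by field; rewrite h gt_eqF.
have s6 j : w j = \sum_(i < n) cw j i * u i.
  have -> : \sum_(i < n) cw j i * u i =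
     (\sum_(i < n) (if c i == j then pp i else 0) * u i + lam * \sum_(i < n) cb i * u i)
       / (lam + PP j).
    rewrite mulr_sumr -big_split mulr_suml; apply: eq_bigr => i _.
    rewrite /cw /=; have := lamP_neq0 j => h; field => //.
  rewrite -s5 s4; congr ((_ + _) / _).
  rewrite /U big_mkcond; apply: eq_bigr => i _; by case: ifP; rewrite ?mul0r.
rewrite s1 s6 /ct; under [RHS]eq_bigr do rewrite mulrDl.
rewrite big_split /=.
have -> : \sum_(i < n) (if i == i0 then al i0 else 0) * u i = al i0 * u i0.
  rewrite (bigD1 i0) //= eqxx big1 ?addr0 // => i /negbTE ->; by rewrite mul0r.
by rewrite mulr_sumr; congr (_ + _); apply: eq_bigr => i _; rewrite mulrA.
Qed.

Lemma ct_sum i0 : \sum_(i < n) ct i0 i = 1.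
Proof.
have -> : \sum_(i < n) ct i0 i = \sum_(i < n) ct i0 i * 1.
  by apply: eq_bigr => i _; rewrite mulr1.
symmetry; apply: (@core (fun _ => 1) (fun _ => 1) 1 (fun _ => 1)).
- by move=> i; rewrite !subrr !mulr0.
- by move=> j; rewrite subrr mulr0; apply/esym/big1 => i1 _ /=; rewrite ?subrr mulr0.
- by rewrite big1 // => j _ /=; rewrite ?subrr.
Qed.

End Core.
Lemma scE (R : realType) m p (a : R) (A : 'M[R]_(m, p)) i j : (a *: A) i j = a * A i j.
Proof. by rewrite mxE. Qed.
Lemma adE (R : realType) m p (A B : 'M[R]_(m, p)) i j : (A + B) i j = A i j + B i j.
Proof. by rewrite mxE. Qed.
Lemma opE (R : realType) m p (A : 'M[R]_(m, p)) i j : (- A) i j = - A i j.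
Proof. by rewrite mxE. Qed.
Lemma sbE (R : realType) m p (A B : 'M[R]_(m, p)) i j : (A - B) i j = A i j - B i j.
Proof. by rewrite !mxE. Qed.

Theorem mainTheorem13
  (R : realType) (dT : measure_display) (T : measurableType dT)
  (P : probability T R)
  (n k d : nat) (c : 'I_n -> 'I_k)
  (c_surj : forall j : 'I_k, exists i : 'I_n, c i = j)
  (ni : 'I_n -> nat) (X : forall i : 'I_n, 'M[R]_(ni i, d))
  (beta : 'I_n -> R) (beta_pos : forall i, 0 < beta i)
  (XtX : forall i, (X i)^T *m X i = beta i *: 1%:M)
  (sbar2 : R) (sbarj2 : 'I_k -> R) (s2 : 'I_n -> R)
  (sbar2_pos : 0 < sbar2) (sbarj2_pos : forall j, 0 < sbarj2 j)
  (s2_pos : forall i, 0 < s2 i)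
  (thetabar : 'cV[R]_d)
  (xibar : 'I_k -> T -> 'cV[R]_d) (xi : 'I_n -> T -> 'cV[R]_d)
  (eps : forall i : 'I_n, T -> 'cV[R]_(ni i))
  (indep : mutually_independent P (noise_coord xibar xi eps))
  (gauss : forall z, has_normal_law P (noise_coord xibar xi eps z)
                       (noise_var c sbar2 sbarj2 s2 z))
  (thetahat : T -> 'I_n -> 'cV[R]_d)
  (thetahat_min : forall w : T, exists (wv : 'I_k -> 'cV[R]_d) (wbar : 'cV[R]_d),
      forall theta' wv' wbar',
        hier_obj c X sbar2 sbarj2 s2 (obs c X thetabar xibar xi eps ^~ w)
                 (thetahat w) wv wbar
        <= hier_obj c X sbar2 sbarj2 s2 (obs c X thetabar xibar xi eps ^~ w)
                 theta' wv' wbar')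
  (i : 'I_n) :
  exists L : forall i' : 'I_n, 'M[R]_(d, ni i'),
    \sum_(i' < n) L i' *m X i' = 1%:M /\
    (\int[P]_w (sqnorm (\sum_(i' < n) L i' *m obs c X thetabar xibar xi eps i' w
                        - theta_star c thetabar xibar xi i w))%:E
     <= \int[P]_w (sqnorm (thetahat w i - theta_star c thetabar xibar xi i w))%:E)%E.
Proof.
pose L := fun i' : 'I_n => (ct c beta sbar2 sbarj2 s2 i i' / beta i') *: (X i')^T.
exists L; split.
  rewrite /L.
  under eq_bigr do rewrite -scalemxAl XtX scalerA divfK ?gt_eqF //.
  by rewrite -scaler_suml (ct_sum c_surj beta_pos sbar2_pos sbarj2_pos s2_pos) scale1r.
have Hpt : forall w, \sum_(i' < n) L i' *m obs c X thetabar xibar xi eps i' w = thetahat w i.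
  move=> w.
  have [wv [wbar Hmin]] := thetahat_min w.
  set yv := obs c X thetabar xibar xi eps ^~ w in Hmin.
  have Hm : forall th' w' b', objS c X sbar2 sbarj2 s2 yv (thetahat w) wv wbar
      <= objS c X sbar2 sbarj2 s2 yv th' w' b'.
    by move=> th' w' b'; rewrite -!obj_split.
  have E1 := foc1 sbarj2_pos s2_pos Hm.
  have E2 := foc2 sbar2_pos sbarj2_pos Hm.
  have E3 := foc3 sbar2_pos Hm.
  pose V := fun i' => (X i')^T *m yv i'.
  have E1' : forall i', (sbarj2 (c i'))^-1 *: (thetahat w i' - wv (c i')) =
      (s2 i')^-1 *: (V i' - beta i' *: thetahat w i').
    by move=> i'; rewrite E1 mulmxBr mulmxA XtX -scalemxAl mul1mx.
  apply/matrixP => a0 z; rewrite (ord1 z) summxE.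
  have := @core R n k c beta sbar2 sbarj2 s2 c_surj beta_pos sbar2_pos sbarj2_pos s2_pos
    (fun i' => thetahat w i' a0 0) (fun j => wv j a0 0) (wbar a0 0)
    (fun i' => (beta i')^-1 * V i' a0 0).
  move=> /(_ _ _ _ i) ->.
  - apply: eq_bigr => i' _.
    by rewrite /L -scalemxAl scE -/(V i') mulrA.
  - move=> i'; have := congr1 (fun M : 'cV[R]_d => M a0 0) (E1' i').
    rewrite /= !scE !sbE scE /GG mulrA divff ?gt_eqF // mul1r => ->.
    done.
  - move=> j; have := congr1 (fun M : 'cV[R]_d => M a0 0) (E2 j).
    rewrite /= scE sbE summxE /lam => ->.
    by apply: eq_bigr => i' _; rewrite scE sbE.
  - have := congr1 (fun M : 'cV[R]_d => M a0 0) E3.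
    rewrite /= summxE mxE => E; rewrite -[RHS]E; apply: eq_bigr => j _; by rewrite sbE.
under eq_integral do rewrite Hpt.
by [].
Qed.
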